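(* Let $\Omega$ be a finite set with $|\Omega|\ge2$ and $0<\varepsilon<1/2$. There is $n_0=n_0(\varepsilon,\Omega)$ such that the following holds for all $n>n_0$. Let $\mu\in\mathcal P(\Omega^n)$ and let $S_1,\dots,S_l\subset\Omega^n$ be pairwise disjoint sets such that (i) $\sum_{i=1}^l\mu(S_i)>1-\varepsilon$, and (ii) $\mu(S_i)>0$ and the conditional distribution $\mu[\cdot|S_i]$ is $(\varepsilon/9)^3$-symmetric for each $1\le i\le l$. Let $z=\sum_{h=1}^l\mu(S_h)$. Then $D_\square\Big(\mu,\ \frac1z\sum_{i=1}^l\mu(S_i)\bigotimes_{j=1}^n\mu_j[\cdot|S_i]\Big)<2\varepsilon$.
   Context: $\mathcal P(\mathcal X)$ denotes the set of probability measures on a finite set $\mathcal X$; $[n]=\{1,\dots,n\}$; $\|p-q\|_{TV}=\frac12\sum_x|p(x)-q(x)|$. For $\mu\in\mathcal P(\Omega^n)$, $\mu_j$ and $\mu_{i,j}$ denote the marginals on coordinate $j$ and coordinates $\{i,j\}$; $\mu_j[\cdot|S]$ is the $j$-th marginal of the conditional measure $\mu[\cdot|S]$. $\mu\in\mathcal P(\Omega^V)$ is $\varepsilon$-symmetric if $\frac1{|V|^2}\sum_{i,j\in V,\,i\ne j}\|\mu_{i,j}-\mu_i\otimes\mu_j\|_{TV}<\varepsilon$. For $\mu,\nu\in\mathcal P(\Omega^n)$ let $\Gamma(\mu,\nu)$ be the set of couplings, i.e. probability measures $\gamma$ on $\Omega^n\times\Omega^n$ whose first and second marginals are $\mu$ and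 $\nu$. The cut metric is $D_\square(\mu,\nu)=\frac1n\min_{\gamma\in\Gamma(\mu,\nu)}\max_{I\subset[n],\,B\subset\Omega^n\times\Omega^n,\,\omega\in\Omega}\Big|\sum_{i\in I}\sum_{(\sigma,\tau)\in B}\gamma(\sigma,\tau)\big(\mathbf 1\{\sigma_i=\omega\}-\mathbf 1\{\tau_i=\omega\}\big)\Big|$. *)

(* Defs.v *)
From HB Require Import structures.
From mathcomp Require Import all_boot all_order all_algebra.
Set Implicit Arguments. Unset Strict Implicit. Unset Printing Implicit Defensive.
Import Order.TTheory GRing.Theory Num.Theory.
Local Open Scope ring_scope.

Section Defs.
Variable R : realFieldType.

Definition config (Omega : finType) (n : nat) := {ffun 'I_n -> Omega}.

Definition is_prob (T : finType) (p : T -> R) : Prop :=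
  (forall x, 0 <= p x) /\ \sum_(x : T) p x = 1.

Definition mass (T : finType) (p : T -> R) (S : {set T}) : R :=
  \sum_(x in S) p x.

Definition cond (T : finType) (p : T -> R) (S : {set T}) : T -> R :=
  fun x => if x \in S then p x / mass p S else 0.

Definition tv (T : finType) (p q : T -> R) : R :=
  2^-1 * \sum_(x : T) `|p x - q x|.

Definition marg1 (Omega : finType) n (p : config Omega n -> R) (j : 'I_n)
  : Omega -> R :=
  fun w => \sum_(s : config Omega n | s j == w) p s.

Definition marg2 (Omega : finType) n (p : config Omega n -> R) (i j : 'I_n)
  : Omega * Omega -> R :=
  fun w => \sum_(s : config Omega n | (s i, s j) == w) p s.

Definition prod2 (Omega : finType) (p q : Omega -> R) : Omega * Omega -> R :=
  fun w => p w.1 * q w.2.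

Definition eps_symmetric (Omega : finType) n (p : config Omega n -> R) (eps : R)
  : Prop :=
  (n%:R ^+ 2)^-1 * \sum_(i : 'I_n) \sum_(j : 'I_n | i != j)
      tv (marg2 p i j) (prod2 (marg1 p i) (marg1 p j)) < eps.

Definition is_coupling (T : finType) (mu nu : T -> R) (g : T * T -> R) : Prop :=
  (forall x, 0 <= g x) /\
  (forall s, \sum_(t : T) g (s, t) = mu s) /\
  (forall t, \sum_(s : T) g (s, t) = nu t).

Definition cut_term (Omega : finType) n (g : config Omega n * config Omega n -> R)
  (I : {set 'I_n}) (B : {set config Omega n * config Omega n}) (w : Omega) : R :=
  `| \sum_(i in I) \sum_(st in B)
        g st * ((st.1 i == w)%:R - (st.2 i == w)%:R) |.

Definition cut_value (Omega : finType) n (g : config Omega n * config Omega n -> R)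
  : R :=
  \big[Num.max/0]_(I : {set 'I_n})
   \big[Num.max/0]_(B : {set config Omega n * config Omega n})
   \big[Num.max/0]_(w : Omega) cut_term g I B w.

(* D_square is (1/n) times a minimum over the compact
   set of couplings of a continuous function; the minimum is attained, so
   "D_square(mu,nu) < c" means exactly: some coupling gamma has value < c. *)
Definition cut_dist_lt (Omega : finType) n (mu nu : config Omega n -> R) (c : R)
  : Prop :=
  exists g, is_coupling mu nu g /\ n%:R^-1 * cut_value g < c.

Definition prod_meas (Omega : finType) n (q : 'I_n -> Omega -> R)
  : config Omega n -> R :=
  fun s => \prod_(j : 'I_n) q j (s j).

End Defs.

(* Main.v *)
Require Import Defs.
From HB Require Import structures.
From mathcomp Require Import all_boot all_order all_algebra.
From mathcomp Require Import ring lra.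
Import Order.TTheory GRing.Theory Num.Theory.
Set Implicit Arguments. Unset Strict Implicit.
Local Open Scope ring_scope.

Section Aux.
Variable R : realFieldType.
Variable Omega : finType.
Variable n : nat.
Local Notation T := (config Omega n).

Definition ind (w : Omega) (a : 'I_n) (s : T) : R := (s a == w)%:R.

Lemma sum_ind (F : Omega -> R) (w : Omega) :
  \sum_(x : Omega) F x * (x == w)%:R = F w.
Proof.
rewrite (bigD1 w) //= eqxx mulr1 big1 ?addr0 // => x /negbTE ->; by rewrite mulr0.
Qed.

Lemma marg1_sum (p : T -> R) (j : 'I_n) :
  \sum_(w : Omega) marg1 p j w = \sum_(s : T) p s.
Proof.
by rewrite (partition_big (fun s : T => s j) predT) //.
Qed.

Lemma E_ind (p : T -> R) a w :
  \sum_(s : T) p s * ind w a s = marg1 p a w.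
Proof.
rewrite /marg1 [RHS]big_mkcond /=; apply: eq_bigr => s _.
by rewrite /ind; case: (s a == w); rewrite ?mulr1 ?mulr0.
Qed.

Lemma E_ind2 (p : T -> R) a b w :
  \sum_(s : T) p s * (ind w a s * ind w b s) = marg2 p a b (w, w).
Proof.
rewrite /marg2 [RHS]big_mkcond /=; apply: eq_bigr => s _.
rewrite /ind xpair_eqE.
by case: (s a == w); case: (s b == w); rewrite /= ?mulr1 ?mulr0.
Qed.

Lemma prod_sum (q : 'I_n -> Omega -> R) (h : 'I_n -> Omega -> R) :
  \sum_(s : T) prod_meas q s * \prod_(j : 'I_n) h j (s j) =
  \prod_(j : 'I_n) \sum_(x : Omega) q j x * h j x.
Proof.
rewrite bigA_distr_bigA /=; apply: eq_bigr => s _.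
by rewrite /prod_meas -big_split.
Qed.

End Aux.
Arguments ind {R Omega n}.


Section Aux2.
Variable R : realFieldType.
Variable Omega : finType.
Variable n : nat.
Local Notation T := (config Omega n).
Variable q : 'I_n -> Omega -> R.
Hypothesis q1 : forall j, \sum_(x : Omega) q j x = 1.

Lemma prod_total : \sum_(s : T) prod_meas q s = 1.
Proof.
have := prod_sum q (fun _ _ => 1).
under eq_bigr do rewrite big1 // mulr1.
move=> ->; apply: big1 => j _; under eq_bigr do rewrite mulr1; exact: q1.
Qed.

Lemma prod_E1 a w : \sum_(s : T) prod_meas q s * ind w a s = q a w.
Proof.
pose h := fun j (x : Omega) => if j == a then (x == w)%:R else 1 : R.
transitivity (\sum_(s : T) prod_meas q s * \prod_(j : 'I_n) h j (s j)).
  apply: eq_bigr => s _; congr (_ * _).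
  rewrite (bigD1 a) //= {1}/h eqxx big1 ?mulr1 // => j /negbTE.
  by rewrite /h => ->.
rewrite prod_sum (bigD1 a) //= {1}/h eqxx /= sum_ind big1 ?mulr1 //.
move=> j /negbTE; rewrite /h => ->; under eq_bigr do rewrite mulr1; exact: q1.
Qed.

Lemma prod_E2 a b w : a != b ->
  \sum_(s : T) prod_meas q s * (ind w a s * ind w b s) = q a w * q b w.
Proof.
move=> ab; have ba : b != a by rewrite eq_sym.
pose h := fun j (x : Omega) => if (j == a) || (j == b) then (x == w)%:R else 1 : R.
transitivity (\sum_(s : T) prod_meas q s * \prod_(j : 'I_n) h j (s j)).
  apply: eq_bigr => s _; congr (_ * _).
  rewrite (bigD1 a) //= (bigD1 b) /=; last by rewrite ba.
  rewrite {1 2}/h eqxx (negbTE ba) eqxx /= big1 ?mulr1 //.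
  by move=> j /andP[/negbTE Ha /negbTE Hb]; rewrite /h Ha Hb.
rewrite prod_sum (bigD1 a) //= (bigD1 b) /=; last by rewrite ba.
rewrite {1 2}/h eqxx (negbTE ba) eqxx /= !sum_ind.
rewrite big1 ?mulr1 //.
move=> j /andP[/negbTE Ha /negbTE Hb]; rewrite /h Ha Hb.
under eq_bigr do rewrite mulr1; exact: q1.
Qed.

End Aux2.


Section Moment.
Variable R : realFieldType.
Variable Omega : finType.
Variable n : nat.
Local Notation T := (config Omega n).
Variable p : T -> R.
Hypothesis p0 : forall s, 0 <= p s.
Hypothesis p1 : \sum_(s : T) p s = 1.
Local Notation q := (fun j => marg1 p j).
Local Notation nu := (prod_meas q).

Lemma q1 j : \sum_(x : Omega) q j x = 1.
Proof. by rewrite marg1_sum. Qed.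

Lemma nu1 : \sum_(s : T) nu s = 1.
Proof. exact: (prod_total q1). Qed.

Lemma ind01 w a (s : T) : 0 <= ind (R:=R) w a s <= 1.
Proof. rewrite /ind; case: (s a == w); apply/andP; split => /=; lra. Qed.

Variable w : Omega.

Lemma cross a b : a != b ->
  \sum_(x : T) \sum_(y : T) p x * nu y *
     ((ind w a x - ind w a y) * (ind w b x - ind w b y))
  = marg2 p a b (w, w) - q a w * q b w.
Proof.
move=> ab.
transitivity (\sum_(x : T) (p x * (ind w a x * ind w b x) - p x * ind w a x * q b w
     - p x * ind w b x * q a w + p x * (q a w * q b w))).
  apply: eq_bigr => x _.
  set u := ind w a x; set v := ind w b x.
  transitivity (\sum_(y : T) (p x * u * v * nu y - p x * u * (nu y * ind w b y)
     - p x * v * (nu y * ind w a y) + p x * (nu y * (ind w a y * ind w b y)))).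
    by apply: eq_bigr => y _; ring.
  rewrite big_split /= !sumrB -!mulr_sumr nu1 !(prod_E1 q1) (prod_E2 q1 _ ab).
  ring.
rewrite big_split /= !sumrB -!mulr_suml p1 E_ind2 !E_ind.
ring.
Qed.

Lemma diag a :
  \sum_(x : T) \sum_(y : T) p x * nu y * ((ind w a x - ind w a y) * (ind w a x - ind w a y))
  <= 1.
Proof.
have nu0 : forall y, 0 <= nu y.
  move=> y; apply: prodr_ge0 => j _; apply: sumr_ge0 => s _; exact: p0.
apply: (@le_trans _ _ (\sum_(x : T) \sum_(y : T) p x * nu y)).
  apply: ler_sum => x _; apply: ler_sum => y _.
  rewrite -[X in _ <= X]mulr1; apply: ler_wpM2l; first exact: mulr_ge0.
  have := ind01 w a x; have := ind01 w a y; nra.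
under eq_bigr do rewrite -mulr_sumr nu1 mulr1.
by rewrite p1.
Qed.

End Moment.


Section Moment2.
Variable R : realFieldType.
Variable Omega : finType.
Variable n : nat.
Local Notation T := (config Omega n).

Lemma swap4 (I : {set 'I_n}) (c : T -> T -> R) (F : 'I_n -> 'I_n -> T -> T -> R) :
  \sum_(x : T) \sum_(y : T) c x y * (\sum_(a in I) \sum_(b in I) F a b x y) =
  \sum_(a in I) \sum_(b in I) \sum_(x : T) \sum_(y : T) c x y * F a b x y.
Proof.
under eq_bigr => x _ do under eq_bigr => y _ do rewrite mulr_sumr.
under eq_bigr => x _ do under eq_bigr => y _ do under eq_bigr => a _ do rewrite mulr_sumr.
under eq_bigr => x _ do rewrite exchange_big.
rewrite exchange_big; apply: eq_bigr => a _.
under eq_bigr => x _ do rewrite exchange_big.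
by rewrite exchange_big.
Qed.

End Moment2.

Lemma sum_sub (R : realFieldType) (I : finType) (P Q : pred I) (F : I -> R) :
  (forall i, P i -> Q i) -> (forall i, Q i -> 0 <= F i) ->
  \sum_(i | P i) F i <= \sum_(i | Q i) F i.
Proof.
move=> PQ F0.
rewrite [X in X <= _]big_mkcond [X in _ <= X]big_mkcond; apply: ler_sum => i _.
case: (boolP (P i)) => Pi; first by rewrite (PQ _ Pi).
by case: (boolP (Q i)) => Qi //; apply: F0.
Qed.

Lemma tv_ge0 (R : realFieldType) (T : finType) (p q : T -> R) : 0 <= tv p q.
Proof. rewrite /tv; apply: mulr_ge0; first by rewrite invr_ge0. by apply: sumr_ge0. Qed.

Section Moment3.
Variable R : realFieldType.
Variable Omega : finType.
Variable n : nat.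
Local Notation T := (config Omega n).
Variable p : T -> R.
Hypothesis p0 : forall s, 0 <= p s.
Hypothesis p1 : \sum_(s : T) p s = 1.
Local Notation q := (fun j => marg1 p j).
Local Notation nu := (prod_meas q).
Variable w : Omega.

Definition Dv (I : {set 'I_n}) (x y : T) : R := \sum_(a in I) (ind w a x - ind w a y).

Definition tvsum : R := \sum_(a : 'I_n) \sum_(b : 'I_n | a != b)
   tv (marg2 p a b) (prod2 (marg1 p a) (marg1 p b)).

Lemma cross_le a b : a != b ->
  \sum_(x : T) \sum_(y : T) p x * nu y *
     ((ind w a x - ind w a y) * (ind w b x - ind w b y))
  <= 2 * tv (marg2 p a b) (prod2 (marg1 p a) (marg1 p b)).
Proof.
move=> ab; rewrite (cross p1) // /tv mulrA divff ?mul1r ?pnatr_eq0 //.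
rewrite (bigD1 (w, w)) //=.
rewrite -[X in X <= _]addr0; apply: lerD; first by rewrite /prod2 /= ler_norm.
by apply: sumr_ge0 => *.
Qed.

Lemma second (I : {set 'I_n}) :
  \sum_(x : T) \sum_(y : T) p x * nu y * (Dv I x y) ^+ 2 <= n%:R + 2 * tvsum.
Proof.
under eq_bigr => x _ do under eq_bigr => y _ do rewrite /Dv expr2 big_distrlr.
rewrite swap4.
apply: (@le_trans _ _ (\sum_(a in I) (1 + \sum_(b : 'I_n | a != b)
   2 * tv (marg2 p a b) (prod2 (marg1 p a) (marg1 p b))))).
  apply: ler_sum => a aI; rewrite (bigD1 a) //=.
  apply: lerD; first exact: (diag p0 p1).
  apply: (@le_trans _ _ (\sum_(b in I | b != a)
     2 * tv (marg2 p a b) (prod2 (marg1 p a) (marg1 p b)))).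
    by apply: ler_sum => b /andP[_ ba]; apply: cross_le; rewrite eq_sym.
  apply: sum_sub => [b /andP[_ ba]|b _]; first by rewrite eq_sym.
  by apply: mulr_ge0 => //; apply: tv_ge0.
apply: (@le_trans _ _ (\sum_(a : 'I_n) (1 + \sum_(b : 'I_n | a != b)
   2 * tv (marg2 p a b) (prod2 (marg1 p a) (marg1 p b))))).
  apply: sum_sub => // a _; apply: addr_ge0 => //; apply: sumr_ge0 => b _.
  by apply: mulr_ge0 => //; apply: tv_ge0.
rewrite big_split /= sumr_const card_ord /tvsum mulr_sumr.
under [X in _ <= _ + X]eq_bigr do rewrite mulr_sumr.
by rewrite -[n%:R]mulr1n mulr1n.
Qed.

End Moment3.
Arguments Dv {R Omega n}.


Section P5.
Variable R : realFieldType.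
Variable Omega : finType.
Variable n : nat.
Local Notation T := (config Omega n).

Lemma L_cut (g : T * T -> R) I B w : (forall st, 0 <= g st) ->
  cut_term g I B w <= \sum_(st : T * T) g st * `|Dv w I st.1 st.2|.
Proof.
move=> g0; rewrite /cut_term exchange_big /=.
under eq_bigr do rewrite -mulr_sumr.
apply: le_trans (ler_norm_sum _ _ _) _.
apply: (@le_trans _ _ (\sum_(st in B) g st * `|Dv w I st.1 st.2|)).
  by apply: ler_sum => st _; rewrite normrM ger0_norm.
apply: sum_sub => // st _; apply: mulr_ge0 => //.
Qed.

Lemma L_abs (c y : R) : 0 < c -> `|y| <= y ^+ 2 / c + c / 4.
Proof.
move=> c0.
have -> : y ^+ 2 = `|y| ^+ 2 by rewrite real_normK ?num_real.
set u := `|y|.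
have e : u ^+ 2 / c + c / 4 - u = (u - c / 2) ^+ 2 / c.
  by field; rewrite gt_eqF.
rewrite -subr_ge0 e; apply: divr_ge0; [exact: sqr_ge0 | exact: ltW].
Qed.

Lemma L_Dle w I (x y : T) : `|Dv (R:=R) w I x y| <= n%:R.
Proof.
apply: le_trans (ler_norm_sum _ _ _) _.
apply: (@le_trans _ _ (\sum_(a in I) (1 : R))).
  apply: ler_sum => a _.
  have := ind01 R w a x; have := ind01 R w a y.
  move=> /andP[h1 h2] /andP[h3 h4].
  by rewrite ler_norml; apply/andP; split; lra.
apply: (@le_trans _ _ (\sum_(a : 'I_n) (1 : R))).
  by apply: sum_sub.
by rewrite sumr_const card_ord.
Qed.

Lemma L_first (p : T -> R) (c d : R) w I :
  (forall s, 0 <= p s) -> \sum_(s : T) p s = 1 -> 0 < c ->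
  tvsum p <= d ->
  \sum_(x : T) \sum_(y : T) p x * prod_meas (fun j => marg1 p j) y * `|Dv w I x y|
  <= (n%:R + 2 * d) / c + c / 4.
Proof.
move=> p0 p1 c0 hd.
have nu0 : forall y, 0 <= prod_meas (fun j => marg1 p j) y.
  move=> y; apply: prodr_ge0 => j _; apply: sumr_ge0 => s _; exact: p0.
apply: (@le_trans _ _ (\sum_(x : T) \sum_(y : T)
   (p x * prod_meas (fun j => marg1 p j) y * (Dv w I x y) ^+ 2 * c^-1
    + c / 4 * (p x * prod_meas (fun j => marg1 p j) y)))).
  apply: ler_sum => x _; apply: ler_sum => y _.
  have h := L_abs (Dv w I x y) c0.
  have hp : 0 <= p x * prod_meas (fun j => marg1 p j) y by apply: mulr_ge0.
  set P := p x * _ in hp *.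
  apply: le_trans (ler_wpM2l hp h) _; rewrite le_eqVlt; apply/orP; left.
  apply/eqP; ring.
under eq_bigr do rewrite big_split /=.
rewrite big_split /=.
under [X in X + _ <= _]eq_bigr do rewrite -mulr_suml.
rewrite -mulr_suml.
under [X in _ + X <= _]eq_bigr do rewrite -mulr_sumr -mulr_sumr (nu1 p1) mulr1.
rewrite -mulr_sumr.
rewrite p1 mulr1; apply: lerD => //.
apply: ler_wpM2r; first by rewrite invr_ge0 ltW.
apply: le_trans (second p0 p1 w I) _.
by apply: lerD => //; apply: ler_wpM2l.
Qed.

End P5.


Section P6.
Variable R : realFieldType.
Variable Omega : finType.
Variable n : nat.
Local Notation T := (config Omega n).
Variable mu : T -> R.
Hypothesis mu0 : forall s, 0 <= mu s.
Hypothesis mu1 : \sum_(s : T) mu s = 1.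
Variable l : nat.
Variable S : 'I_l -> {set T}.
Hypothesis Sdisj : forall i j, i != j -> [disjoint S i & S j].
Hypothesis Spos : forall i, 0 < mass mu (S i).

Local Notation wt i := (mass mu (S i)).
Local Notation mi i := (cond mu (S i)).
Local Notation ni i := (prod_meas (fun j => marg1 (cond mu (S i)) j)).
Local Notation z := (\sum_(h < l) mass mu (S h)).
Hypothesis zpos : 0 < z.
Definition nuF := (fun s => z^-1 * \sum_(i < l)
                  mass mu (S i) * prod_meas (fun j => marg1 (cond mu (S i)) j) s).
Definition rF (x : T) := mu x - \sum_(i < l) wt i * mi i x.
Definition gF (st : T * T) := \sum_(i < l) wt i * mi i st.1 * ni i st.2 + rF st.1 * nuF st.2.

Lemma mi0 i x : 0 <= mi i x.
Proof.
rewrite /cond; case: (x \in S i) => //; apply: divr_ge0 => //; exact: ltW.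
Qed.

Lemma mi1 i : \sum_(x : T) mi i x = 1.
Proof.
rewrite /cond -big_mkcond /= -mulr_suml; rewrite -/(mass mu (S i)) divff //; exact: lt0r_neq0.
Qed.

Lemma ni0 i y : 0 <= ni i y.
Proof. apply: prodr_ge0 => j _; apply: sumr_ge0 => s _; exact: mi0. Qed.

Lemma ni1 i : \sum_(y : T) ni i y = 1.
Proof. exact: (nu1 (mi1 i)). Qed.

Lemma wmi i x : wt i * mi i x = if x \in S i then mu x else 0.
Proof.
rewrite /cond; case: (x \in S i); last by rewrite mulr0.
rewrite mulrC -mulrA mulVf ?mulr1 //; exact: lt0r_neq0.
Qed.

Lemma r0 x : 0 <= rF x.
Proof.
rewrite /rF subr_ge0; under eq_bigr do rewrite wmi.
case: (pickP (fun i => x \in S i)) => [i xi|none].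
  rewrite (bigD1 i) //= xi big1 ?addr0 // => j ji.
  case: ifP => // xj; have := Sdisj ji.
  by move/disjointFr => /(_ _ xj); rewrite xi.
by rewrite big1 // => i _; rewrite none.
Qed.

Lemma rsum : \sum_(x : T) rF x = 1 - z.
Proof.
rewrite /rF sumrB mu1 exchange_big /=; congr (_ - _).
by apply: eq_bigr => i _; rewrite -mulr_sumr mi1 mulr1.
Qed.

Lemma nu0 y : 0 <= nuF y.
Proof.
apply: mulr_ge0; first by rewrite invr_ge0 ltW.
apply: sumr_ge0 => i _; apply: mulr_ge0; [exact: ltW | exact: ni0].
Qed.

Lemma nusum : \sum_(y : T) nuF y = 1.
Proof.
rewrite /nuF -mulr_sumr exchange_big /=.
rewrite [X in _ * X](eq_bigr (fun i => wt i)); last by move=> i _; rewrite -mulr_sumr ni1 mulr1.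
by rewrite mulVf // lt0r_neq0.
Qed.

Lemma coupling : is_coupling mu nuF gF.
Proof.
split; [|split].
- move=> [x y]; rewrite /gF /=; apply: addr_ge0.
    apply: sumr_ge0 => i _; apply: mulr_ge0; [apply: mulr_ge0|exact: ni0].
      exact: ltW.
    exact: mi0.
  by apply: mulr_ge0; [exact: r0 | exact: nu0].
- move=> x; rewrite /gF /= big_split /= -mulr_sumr nusum mulr1 exchange_big /=.
  under eq_bigr do rewrite -mulr_sumr ni1 mulr1.
  by rewrite /rF addrC subrK.
- move=> y; rewrite /gF /= big_split /= -mulr_suml rsum exchange_big /=.
  under eq_bigr do rewrite -mulr_suml -mulr_sumr mi1 mulr1.
  have -> : \sum_(i < l) wt i * ni i y = z * nuF y.
    by rewrite /nuF mulrA mulfV ?mul1r // lt0r_neq0.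
  ring.
Qed.


Lemma swap3 (c : 'I_l -> R) (F : 'I_l -> T -> T -> R) :
  \sum_(i < l) c i * (\sum_(x : T) \sum_(y : T) F i x y) =
  \sum_(x : T) \sum_(y : T) \sum_(i < l) c i * F i x y.
Proof.
under eq_bigr => i _ do rewrite mulr_sumr.
under eq_bigr => i _ do under eq_bigr => x _ do rewrite mulr_sumr.
rewrite exchange_big; apply: eq_bigr => x _.
by rewrite exchange_big.
Qed.

Lemma cut_bound (c d : R) : 0 < c -> 0 <= d -> (forall i, tvsum (mi i) <= d) ->
  cut_value gF <= z * ((n%:R + 2 * d) / c + c / 4) + n%:R * (1 - z).
Proof.
move=> c0 d0 hd.
have z1 : 0 <= 1 - z by rewrite -rsum; apply: sumr_ge0 => x _; exact: r0.
have K0 : 0 <= z * ((n%:R + 2 * d) / c + c / 4) + n%:R * (1 - z).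
  apply: addr_ge0; last by apply: mulr_ge0.
  apply: mulr_ge0; first exact: ltW.
  apply: addr_ge0; apply: divr_ge0 => //; try exact: ltW.
  by apply: addr_ge0 => //; apply: mulr_ge0.
rewrite /cut_value; apply: bigmax_le => // I _.
apply: bigmax_le => // B _; apply: bigmax_le => // w _.
have [g0 _] := coupling.
apply: le_trans (L_cut I B w g0) _.
have -> : \sum_(st : T * T) gF st * `|Dv w I st.1 st.2| =
   \sum_(x : T) \sum_(y : T) gF (x, y) * `|Dv w I x y|.
  by rewrite pair_bigA; apply: eq_bigr => -[x y].
have -> : \sum_(x : T) \sum_(y : T) gF (x, y) * `|Dv w I x y| =
   \sum_(i < l) wt i * (\sum_(x : T) \sum_(y : T) mi i x * ni i y * `|Dv w I x y|)
   + \sum_(x : T) \sum_(y : T) rF x * nuF y * `|Dv w I x y|.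
  rewrite swap3 -big_split /=; apply: eq_bigr => x _.
  rewrite -big_split /=; apply: eq_bigr => y _.
  rewrite /gF /= mulrDl mulr_suml; congr (_ + _).
  by apply: eq_bigr => i _; ring.
apply: lerD.
  rewrite mulr_suml; apply: ler_sum => i _.
  apply: ler_wpM2l; first exact: ltW.
  exact: (L_first w I (@mi0 i) (mi1 i) c0 (hd i)).
apply: (@le_trans _ _ (\sum_(x : T) \sum_(y : T) rF x * nuF y * n%:R)).
  apply: ler_sum => x _; apply: ler_sum => y _.
  apply: ler_wpM2l; first by apply: mulr_ge0; [exact: r0 | exact: nu0].
  exact: L_Dle.
under eq_bigr do rewrite -mulr_suml -mulr_sumr nusum mulr1.
by rewrite -mulr_suml rsum mulrC.
Qed.

End P6.


Lemma final (R : realFieldType) (N eps z : R) : 0 < N -> 4 < N * eps ^+ 2 -> 0 < eps ->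
  eps < 2^-1 -> 1 - eps < z ->
  N^-1 * (z * ((N + 2 * ((eps / 9) ^+ 3 * N ^+ 2)) / (N * eps) + N * eps / 4)
          + N * (1 - z)) < 2 * eps.
Proof.
move=> N0 Ne e0 e1 hz.
have Nn : N != 0 by rewrite gt_eqF.
have en : eps != 0 by rewrite gt_eqF.
set x := (N * eps)^-1.
have -> : N^-1 * (z * ((N + 2 * ((eps / 9) ^+ 3 * N ^+ 2)) / (N * eps) + N * eps / 4)
          + N * (1 - z)) = z * (x + 2 * eps ^+ 2 / 729 + eps / 4) + (1 - z).
  by rewrite /x; field; rewrite Nn en.
have x0 : 0 < x by rewrite /x invr_gt0 mulr_gt0.
have hx : x * (N * eps ^+ 2) = eps by rewrite /x; field; rewrite Nn en.
have hx4 : x < eps / 4.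
  have : 0 < x * (N * eps ^+ 2 - 4) by apply: mulr_gt0; lra.
  rewrite mulrBr hx; lra.
have he2 : 2 * eps ^+ 2 / 729 <= eps / 2.
  have : eps ^+ 2 <= eps by rewrite expr2; nra.
  lra.
set A := x + _ + _.
have hA : A < eps by rewrite /A; lra.
have hA0 : 0 <= A.
  rewrite /A; apply: addr_ge0; last lra.
  apply: addr_ge0; first exact: ltW.
  apply: divr_ge0; last by [].
  by apply: mulr_ge0 => //; exact: sqr_ge0.
have : 0 < (z - (1 - eps)) * (1 - A) by apply: mulr_gt0; lra.
nra.
Qed.


Unset Implicit Arguments.
Set Strict Implicit.
Theorem proposition2p6 (R : archiRcfType) (Omega : finType)
  (hOmega : (1 < #|Omega|)%N) (eps : R) (heps0 : 0 < eps) (heps1 : eps < 2^-1) :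
  exists n0 : nat, forall n : nat, (n0 < n)%N ->
  forall (mu : config Omega n -> R), is_prob mu ->
  forall (l : nat) (S : 'I_l -> {set config Omega n}),
    (forall i j, i != j -> [disjoint S i & S j]) ->
    1 - eps < \sum_(i < l) mass mu (S i) ->
    (forall i, 0 < mass mu (S i) /\
               eps_symmetric (cond mu (S i)) ((eps / 9) ^+ 3)) ->
    let z := \sum_(h < l) mass mu (S h) in
    cut_dist_lt mu
      (fun s => z^-1 * \sum_(i < l)
                  mass mu (S i) * prod_meas (fun j => marg1 (cond mu (S i)) j) s)
      (2 * eps).
Proof.
have b0 : 0 <= 4 / eps ^+ 2 by apply: divr_ge0 => //; exact: sqr_ge0.
exists (Num.bound (4 / eps ^+ 2)) => n hn mu [mu0 mu1] l S Sdisj hz hS z.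
have Spos : forall i, 0 < mass mu (S i) by move=> i; case: (hS i).
have zpos : 0 < z by rewrite /z; lra.
set N : R := n%:R.
have hb := archi_boundP b0.
have hNb : (Num.bound (4 / eps ^+ 2))%:R < N by rewrite /N ltr_nat.
have N0 : 0 < N by apply: le_lt_trans hNb; exact: ler0n.
have Ne : 4 < N * eps ^+ 2.
  have e2 : 0 < eps ^+ 2 by apply: exprn_gt0.
  have : 4 / eps ^+ 2 < N by apply: lt_trans hNb.
  by rewrite ltr_pdivrMr.
set d := (eps / 9) ^+ 3 * N ^+ 2.
have hd : forall i, tvsum (cond mu (S i)) <= d.
  move=> i; case: (hS i) => _; rewrite /eps_symmetric -/N => h.
  have N2 : 0 < N ^+ 2 by apply: exprn_gt0.
  rewrite /d; apply: ltW; move: h; rewrite -(ltr_pM2l N2) mulrA mulfV ?mul1r ?gt_eqF //.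
  by rewrite mulrC.
have d0 : 0 <= d by apply: mulr_ge0; apply: exprn_ge0; lra.
have c0 : 0 < N * eps by apply: mulr_gt0.
exists (gF mu S); split; first exact: (coupling mu0 mu1 Sdisj Spos zpos).
apply: le_lt_trans (final N0 Ne heps0 heps1 hz).
apply: ler_wpM2l; first by rewrite invr_ge0 ltW.
exact: (cut_bound mu0 mu1 Sdisj Spos zpos c0 d0 hd).
Qed.
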